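(* Let $\mathbb{X}=\{T,F\}$, $n\ge1$, and for $i=1,\dots,n$ let $Bel_{\mathbb{X}_i}$ be a belief function on $\mathbb{X}_i=\mathbb{X}$. Define the belief likelihood $Bel_{\mathbb{X}_1\times\cdots\times\mathbb{X}_n}$ as the combination $Bel_{\mathbb{X}_1}^{\uparrow}\odot\cdots\odot Bel_{\mathbb{X}_n}^{\uparrow}$ of the vacuous extensions to $\mathbb{X}_1\times\cdots\times\mathbb{X}_n$, where $\odot$ is either Dempster's rule $\oplus$ or the conjunctive rule. Then for every tuple $(x_1,\dots,x_n)$ with $x_i\in\mathbb{X}_i$, \[ Bel_{\mathbb{X}_1\times\cdots\times\mathbb{X}_n}(\{(x_1,\dots,x_n)\})=\prod_{i=1}^n Bel_{\mathbb{X}_i}(\{x_i\}). \]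
   Context: A mass function on a finite set $\Theta$ is $m:2^\Theta\to[0,1]$ with $\sum_A m(A)=1$ (for Dempster's rule also $m(\emptyset)=0$); belief function $Bel(A)=\sum_{B\subseteq A}m(B)$ (for unnormalised masses the sum is over non-empty $B\subseteq A$). With $m_\cap(A)=\sum_{B\cap C=A}m_1(B)m_2(C)$, Dempster's rule gives $m_\oplus(A)=m_\cap(A)/(1-m_\cap(\emptyset))$ for $A\neq\emptyset$, and the conjunctive rule gives $m(A)=m_\cap(A)$ for all $A$ including $\emptyset$. The vacuous extension of a belief function on $\mathbb{X}_i$ with mass $m_i$ to $\mathbb{X}_1\times\cdots\times\mathbb{X}_n$ assigns mass $m_i(B)$ to $\mathbb{X}_1\times\cdots\times\mathbb{X}_{i-1}\times B\times\mathbb{X}_{i+1}\times\cdots\times\mathbb{X}_n$ and $0$ elsewhere. (In the paper each $Bel_{\mathbb{X}_i}$ depends on a parameter $\theta$, which is held fixed.) *)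

(* Defs.v *)
From mathcomp Require Import all_boot all_order all_algebra.
Set Implicit Arguments. Unset Strict Implicit. Unset Printing Implicit Defensive.
Import Order.TTheory GRing.Theory Num.Theory.
Local Open Scope ring_scope.

Section DS.
Variable R : realFieldType.

(* A (possibly unnormalised) mass function on a finite frame T. *)
Definition is_mass (T : finType) (m : {set T} -> R) : Prop :=
  (forall A, 0 <= m A) /\ \sum_(A : {set T}) m A = 1.

(* Belief function: sum over non-empty subsets of A (coincides with the usual
   definition when m(emptyset) = 0). *)
Definition Bel (T : finType) (m : {set T} -> R) (A : {set T}) : R :=
  \sum_(B : {set T} | (B != set0) && (B \subset A)) m B.

Definition conj_comb (T : finType) (m1 m2 : {set T} -> R) (A : {set T}) : R :=
  \sum_(B : {set T}) \sum_(C : {set T} | B :&: C == A) m1 B * m2 C.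

Definition dempster (T : finType) (m1 m2 : {set T} -> R) (A : {set T}) : R :=
  if A == set0 then 0
  else conj_comb m1 m2 A / (1 - conj_comb m1 m2 set0).

Inductive comb_rule := Dempster | Conjunctive.

Definition apply_rule (r : comb_rule) (T : finType) :
  ({set T} -> R) -> ({set T} -> R) -> ({set T} -> R) :=
  match r with Dempster => @dempster T | Conjunctive => @conj_comb T end.

Definition vacuous (T : finType) (A : {set T}) : R := (A == setT)%:R.

(* The product frame X_1 x ... x X_n with X_i = X = {T, F} = bool. *)
Definition prodX (n : nat) := {ffun 'I_n -> bool}.

Definition cyl (n : nat) (i : 'I_n) (B : {set bool}) : {set prodX n} :=
  [set x : prodX n | x i \in B].

Definition vac_ext (n : nat) (i : 'I_n) (m : {set bool} -> R)
    (A : {set prodX n}) : R :=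
  \sum_(B : {set bool} | A == cyl i B) m B.

(* Belief likelihood: Bel_1^up (.) ... (.) Bel_n^up (mass function),
   combined right-nested with the vacuous mass as neutral element. *)
Definition belief_likelihood (r : comb_rule) (n : nat)
    (m : 'I_n -> {set bool} -> R) : {set prodX n} -> R :=
  \big[apply_rule r (T := prodX n) / vacuous (T := prodX n)]_(i < n)
     vac_ext i (m i).

End DS.

(* Main.v *)
Require Import Defs.
From mathcomp Require Import all_boot all_order all_algebra.
From Stdlib Require Import Classical.
Set Implicit Arguments. Unset Strict Implicit. Unset Printing Implicit Defensive.
Import Order.TTheory GRing.Theory Num.Theory.
Local Open Scope ring_scope.

Section S.
Variable R : realFieldType.

Lemma conj_vac n (i : 'I_n) (mi : {set bool} -> R) (M : {set prodX n} -> R) A :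
 conj_comb (vac_ext i mi) M A = \sum_(Bb : {set bool}) \sum_(C : {set prodX n} | cyl i Bb :&: C == A) mi Bb * M C.
Proof.
rewrite /conj_comb /vac_ext.
under eq_bigr => B' _ do under eq_bigr => C _ do rewrite mulr_suml.
under eq_bigr => B' _ do rewrite exchange_big /=.
under eq_bigr => B' _ do rewrite big_mkcond /=.
rewrite exchange_big /=; apply: eq_bigr => Bb _.
by rewrite -big_mkcond /= big_pred1_eq.
Qed.

Definition prodset n (s : seq 'I_n) (B : 'I_n -> {set bool}) : {set prodX n} :=
  [set y : prodX n | all (fun j => y j \in B j) s].

Definition upd n (y : prodX n) (i : 'I_n) (b : bool) : prodX n :=
  [ffun k => if k == i then b else y k].

Lemma prodset_cons n (i : 'I_n) s B : prodset (i :: s) B = cyl i (B i) :&: prodset s B.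
Proof. by apply/setP => y; rewrite !inE. Qed.

Lemma prodset_upd n (i : 'I_n) s B y b : i \notin s ->
  (upd y i b \in prodset s B) = (y \in prodset s B).
Proof.
move=> ni; rewrite !inE; apply: eq_in_all => j js; rewrite ffunE.
by case: eqP => // ej; move: js; rewrite ej (negbTE ni).
Qed.

Lemma in_cyl n (i : 'I_n) B y : (y \in cyl i B) = (y i \in B).
Proof. by rewrite inE. Qed.

Lemma upd_i n (y : prodX n) i b : upd y i b i = b.
Proof. by rewrite ffunE eqxx. Qed.

Lemma uniq_box n (i : 'I_n) s Bb Bc (x : prodX n) : i \notin s ->
  cyl i Bb :&: prodset s Bc = prodset (i :: s) (fun j => [set x j]) ->
  Bb = [set x i] /\ prodset s Bc = prodset s (fun j => [set x j]).
Proof.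
move=> ni E.
have xin : x \in cyl i Bb :&: prodset s Bc.
  by rewrite E inE /= inE eqxx /=; apply/allP => j _; rewrite inE.
move: (xin); rewrite inE => /andP[xi xs].
split.
  apply/setP => b; rewrite inE.
  have := congr1 (fun S : {set prodX n} => upd x i b \in S) E => /=.
  rewrite !prodset_cons !in_setI !in_cyl !prodset_upd // upd_i xs andbT inE.
  move=> ->; have -> : x \in prodset s (fun j => [set x j]).
    by rewrite inE; apply/allP => j _; rewrite inE.
  by rewrite andbT.
apply/setP => y.
have := congr1 (fun S : {set prodX n} => upd y i (x i) \in S) E => /=.
rewrite !prodset_cons !in_setI !in_cyl !prodset_upd // upd_i.
by rewrite in_cyl in xi; rewrite xi set11.
Qed.

Lemma nonempty_cap n (i : 'I_n) s Bb Bc : i \notin s ->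
  Bb != set0 -> prodset s Bc != set0 -> cyl i Bb :&: prodset s Bc != set0.
Proof.
move=> ni /set0Pn[b bB] /set0Pn[y yC]; apply/set0Pn; exists (upd y i b).
by rewrite inE prodset_upd // yC andbT inE upd_i.
Qed.

Lemma inv_seq r n (m : 'I_n -> {set bool} -> R)
  (hD : r = Dempster -> forall i, m i set0 = 0) (x : prodX n) (s : seq 'I_n) :
  uniq s ->
  let M := \big[@apply_rule R r (prodX n)/@vacuous R (prodX n)]_(i <- s) vac_ext i (m i) in
  [/\ M (prodset s (fun j => [set x j])) = \prod_(j <- s) m j [set x j],
      forall C, M C != 0 -> exists B, C = prodset s B
    & r = Dempster -> M set0 = 0].
Proof.
elim: s => [|i s IH] /=.
  move=> _; rewrite !big_nil; split.
  - have -> : prodset [::] (fun j => [set x j]) = setT by apply/setP => y; rewrite !inE.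
    by rewrite /vacuous eqxx.
  - move=> C; rewrite /vacuous; have [-> _|nC] := eqVneq C setT; last by rewrite eqxx.
    by exists (fun _ => set0); apply/setP => y; rewrite !inE.
  - move=> _; rewrite /vacuous.
    have -> : (set0 == [set: prodX n]) = false.
      by apply/eqP => h; have := in_setT x; rewrite -h inE.
    by [].
move=> /andP[ni us]; have [I1 I2 I3] := IH us.
set M := \big[_/_]_(j <- s) _ in I1 I2 I3.
rewrite big_cons -/M.
set v := vac_ext i (m i).
set X := fun j => [set x j].
have kappa : r = Dempster -> conj_comb v M set0 = 0.
  move=> rD; rewrite conj_vac big1 // => Bb _; rewrite big1 // => C /eqP cond.
  have [->|nzB] := eqVneq Bb set0; first by rewrite hD // mul0r.
  have [->|nzM] := eqVneq (M C) 0; first by rewrite mulr0.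
  have [Bc EC] := I2 _ nzM.
  exfalso; move: cond; rewrite EC => cond.
  have nzC : prodset s Bc != set0.
    apply/eqP => h; have := I3 rD; rewrite -h -EC => MC.
    by rewrite MC eqxx in nzM.
  by move: (nonempty_cap ni nzB nzC); rewrite cond eqxx.
have rule : forall A, A != set0 -> apply_rule r v M A = conj_comb v M A.
  move=> A nA; case E: r kappa => kappa' //=.
  by rewrite /dempster (negbTE nA) kappa' // subr0 divr1.
have xin : x \in prodset (i :: s) X.
  by rewrite inE; apply/allP => j _; rewrite inE.
split.
- rewrite rule; last by apply/set0Pn; exists x.
  rewrite big_cons conj_vac (bigD1 [set x i]) //= (bigD1 (prodset s X)) /=; last first.
    by rewrite -prodset_cons.
  have term : forall Bb C, cyl i Bb :&: C == prodset (i :: s) X ->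
      m i Bb * M C != 0 -> Bb = [set x i] /\ C = prodset s X.
    move=> Bb C /eqP cond nz.
    have [Bc EC] : exists Bc, C = prodset s Bc.
      by apply: I2; apply: contraNneq nz => ->; rewrite mulr0.
    by move: cond; rewrite EC => /(uniq_box ni) [-> ->].
  rewrite [X in _ + X + _]big1; last first.
    move=> C /andP[c1 c2]; apply/eqP; apply: contraNT c2 => /(term _ _ c1) [_ ->].
    by rewrite eqxx.
  rewrite [X in _ + X]big1; last first.
    move=> Bb nB; apply: big1 => C c1; apply/eqP.
    by apply: contraNT nB => /(term _ _ c1) [-> _]; rewrite eqxx.
  by rewrite !addr0 I1.
- move=> A nzA.
  have [A0|nA] := eqVneq A set0.
    exists (fun _ => set0); rewrite A0; apply/setP => y; rewrite !inE.
    by rewrite /= inE.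
  move: nzA; rewrite rule // => nzA.
  case: (classic (exists B, A = prodset (i :: s) B)) => // nex.
  exfalso; move/eqP: nzA; apply; rewrite conj_vac big1 // => Bb _.
  apply: big1 => C /eqP cond.
  have [->|/I2 [Bc EC]] := eqVneq (M C) 0; first by rewrite mulr0.
  exfalso; apply: nex; exists (fun j => if j == i then Bb else Bc j).
  rewrite -cond EC prodset_cons eqxx; congr (_ :&: _).
  apply/setP => y; rewrite !inE; apply: eq_in_all => j js.
  by case: eqP => // ej; move: js; rewrite ej (negbTE ni).
- by move=> rD; rewrite rD /= /dempster eqxx.
Qed.

Lemma Bel1 (T : finType) (mm : {set T} -> R) y : Bel mm [set y] = mm [set y].
Proof.
rewrite /Bel (bigD1 [set y]) /=; last first.
  by rewrite subxx andbT; apply/set0Pn; exists y; rewrite inE.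
rewrite big1 ?addr0 // => B /andP[/andP[nz]].
by rewrite subset1 (negbTE nz) orbF => ->.
Qed.

End S.

Theorem theorem1 (R : realFieldType) (r : comb_rule) (n : nat) (hn : (1 <= n)%N)
  (m : 'I_n -> {set bool} -> R)
  (hm : forall i, is_mass (m i))
  (hD : r = Dempster -> forall i, m i set0 = 0)
  (x : prodX n) :
  Bel (belief_likelihood r m) [set x] = \prod_(i < n) Bel (m i) [set x i].
Proof.
rewrite Bel1; under eq_bigr => i _ do rewrite Bel1.
have [I1 _ _] := inv_seq hD x (index_enum_uniq 'I_n).
have E : prodset (index_enum 'I_n) (fun j => [set x j]) = [set x].
  apply/setP => y; rewrite !inE; apply/allP/eqP => [h|->].
    apply/ffunP => j; have := h j (mem_index_enum j); by rewrite inE => /eqP.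
  by move=> j _; rewrite inE.
by rewrite -E; exact: I1.
Qed.
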